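(* Let $n\geq 2$ be an integer and $b:=-n+i$. If $s$ is a neighbour of $T_n$, then $bs+\delta$ is a neighbour of $T_n$ for some $\delta\in\{0,\pm1,\ldots,\pm n^2\}$.
   Context: $T_n$ is the attractor of the iterated function system $\{z\mapsto b^{-1}(z+d): d\in\{0,1,\ldots,n^2\}\}$, i.e. $T_n=\{\sum_{j\ge1}d_jb^{-j}: d_j\in\{0,\ldots,n^2\}\}$. For $Y\subset\mathbb{C}$, a neighbour of $Y$ is a Gaussian integer $s$ with $Y\cap(Y+s)\neq\emptyset$. *)

(* Defs.v *)
From Stdlib Require Import Reals ZArith.
From Coquelicot Require Import Coquelicot.

Open Scope C_scope.

Definition base (n : nat) : C := (- INR n, 1)%R.

Definition gauss (x y : Z) : C := (IZR x, IZR y).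

Definition InT (n : nat) (z : C) : Prop :=
  exists d : nat -> nat,
    (forall j, (d j <= n ^ 2)%nat) /\
    is_series (fun j => RtoC (INR (d j)) * Cinv (Cpow (base n) (S j))) z.

Definition IsNeighbour (n : nat) (s : C) : Prop :=
  (exists x y : Z, s = gauss x y) /\
  exists z : C, InT n z /\ InT n (z - s).

(* Main.v *)
Require Import Defs.
From Stdlib Require Import Reals ZArith Lra Lia.
From Coquelicot Require Import Coquelicot.
Open Scope C_scope.

Lemma base_neq0 n : base n <> 0.
Proof.
  intro H. injection H as _ H. lra.
Qed.

Lemma shift n z : InT n z -> exists d0 : nat, (d0 <= n ^ 2)%nat /\
  InT n (base n * z - RtoC (INR d0)).
Proof.
  intros [d [Hd Hs]].
  exists (d 0%nat). split; [apply Hd|].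
  exists (fun j => d (S j)). split; [intro j; apply Hd|].
  set (a := fun j : nat => RtoC (INR (d j)) * Cinv (Cpow (base n) (S j))) in Hs.
  assert (H1 : is_series (fun k => a (S k)) (z - a 0%nat)).
  { apply is_series_incr_1. match goal with |- is_series _ ?l => replace l with z end; [exact Hs|].
    change (z = Cplus (z - a 0%nat) (a 0%nat)). ring. }
  apply (is_series_scal (base n)) in H1.
  assert (Hb := base_neq0 n).
  eapply is_series_ext; [|replace (base n * z - RtoC (INR (d 0%nat))) with (scal (base n) (z - a 0%nat)); [exact H1|]].
  - intro j. change (Cmult (base n) (a (S j)) = RtoC (INR (d (S j))) * Cinv (Cpow (base n) (S j))). unfold a. simpl.
    assert (Hp := Cpow_nz (base n) j Hb).
    field. split; auto.
  - change (Cmult (base n) (z - a 0%nat) = base n * z - RtoC (INR (d 0%nat))). unfold a. simpl. field. auto.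
Qed.

Theorem lemma3p6 (n : nat) (s : C) :
  (2 <= n)%nat ->
  IsNeighbour n s ->
  exists delta : Z,
    (Z.abs delta <= Z.of_nat n ^ 2)%Z /\
    IsNeighbour n (base n * s + RtoC (IZR delta)).
Proof.
  intros _ [[x [y Hs]] [z [Hz Hzs]]].
  destruct (shift n z Hz) as [d0 [Hd0 H1]].
  destruct (shift n (z - s) Hzs) as [e0 [He0 H2]].
  exists (Z.of_nat e0 - Z.of_nat d0)%Z. split.
  { assert (Z.of_nat (n ^ 2) = Z.of_nat n ^ 2)%Z by (rewrite Nat2Z.inj_pow; reflexivity).
    apply Nat2Z.inj_le in Hd0. apply Nat2Z.inj_le in He0. lia. }
  split.
  - exists (- Z.of_nat n * x - y + (Z.of_nat e0 - Z.of_nat d0))%Z, (x - Z.of_nat n * y)%Z.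
    subst s. unfold gauss, base, RtoC, Cmult, Cplus. simpl.
    rewrite !plus_IZR, !minus_IZR, !mult_IZR, opp_IZR, <- !INR_IZR_INZ.
    f_equal; ring.
  - exists (base n * z - RtoC (INR d0)). split; [exact H1|].
    replace (base n * z - RtoC (INR d0) - (base n * s + RtoC (IZR (Z.of_nat e0 - Z.of_nat d0))))
      with (base n * (z - s) - RtoC (INR e0)); [exact H2|].
    rewrite minus_IZR, <- !INR_IZR_INZ. unfold RtoC, Cminus, Cplus, Copp, Cmult. simpl.
    f_equal; ring.
Qed.
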